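(* Let $f:X\to Y$ be a closed, injective, $SC^*$-irresolute function between topological spaces. If $Y$ is $SC^*$-regular, then $X$ is $SC^*$-regular.
   Context: For $A\subseteq Z$ in a topological space $Z$: $A$ is semi-open if $A\subseteq cl(int(A))$, semi-closed if its complement is semi-open; $scl(A)$ is the smallest semi-closed set containing $A$. $A$ is $c^*$-open if $int(cl(A))\subseteq A\subseteq cl(int(A))$. $A$ is $SC^*$-closed if $scl(A)\subseteq U$ whenever $A\subseteq U$ and $U$ is $c^*$-open; $A$ is $SC^*$-open if $Z\setminus A$ is $SC^*$-closed. $f$ is $SC^*$-irresolute if $f^{-1}(N)$ is $SC^*$-open in $X$ for every $SC^*$-open $N\subseteq Y$. $Z$ is $SC^*$-regular if for every closed set $F$ and every point $x\notin F$ there exist disjoint $SC^*$-open sets $U,V$ with $F\subseteq U$ and $x\in V$. *)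

(* Defs.v *)
From HB Require Import structures.
From mathcomp Require Import all_boot all_order.
From mathcomp Require Import all_classical all_reals.
From mathcomp Require Import topology.
Set Implicit Arguments. Unset Strict Implicit. Unset Printing Implicit Defensive.
Local Open Scope classical_set_scope.

Section SCstar.
Variable Z : topologicalType.

Definition semi_open (A : set Z) : Prop := A `<=` closure (interior A).
Definition semi_closed (A : set Z) : Prop := semi_open (~` A).

Definition scl (A : set Z) : set Z :=
  \bigcap_(F in [set F | semi_closed F /\ A `<=` F]) F.

Definition cstar_open (A : set Z) : Prop :=
  interior (closure A) `<=` A /\ A `<=` closure (interior A).

Definition SCstar_closed (A : set Z) : Prop :=
  forall U : set Z, A `<=` U -> cstar_open U -> scl A `<=` U.

Definition SCstar_open (A : set Z) : Prop := SCstar_closed (~` A).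

Definition SCstar_regular : Prop :=
  forall (F : set Z) (x : Z), closed F -> ~ F x ->
    exists U V : set Z, SCstar_open U /\ SCstar_open V /\
      U `&` V = set0 /\ F `<=` U /\ V x.
End SCstar.

Definition SCstar_irresolute (X Y : topologicalType) (f : X -> Y) : Prop :=
  forall N : set Y, SCstar_open N -> SCstar_open (f @^-1` N).

Definition closed_map (X Y : topologicalType) (f : X -> Y) : Prop :=
  forall C : set X, closed C -> closed (f @` C).

(* Main.v *)
Require Import Defs.
From mathcomp Require Import all_boot all_classical topology.
Local Open Scope classical_set_scope.

Theorem corollary5p4 (X Y : topologicalType) (f : X -> Y) :
  closed_map f -> injective f -> SCstar_irresolute f ->
  SCstar_regular Y -> SCstar_regular X.
Proof.
move=> cf injf irr regY F x cF Fx.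
have cfF := cf F cF.
have nfx : ~ (f @` F) (f x).
  by case=> y Fy /injf eyx; apply: Fx; rewrite -eyx.
have [U [V [oU [oV [UV [FU Vx]]]]]] := regY _ _ cfF nfx.
exists (f @^-1` U), (f @^-1` V); split; first exact: irr.
split; first exact: irr.
split.
  apply/seteqP; split => z //= [Uz Vz].
  have : (U `&` V) (f z) by [].
  by rewrite UV.
split; last by [].
by move=> z Fz; apply: FU; exists z.
Qed.
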